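(* Let $\mathbf{x}_r=(\mathbf{p}_r,\mathbf{n}_r)$ and $\mathbf{x}_i=(\mathbf{p}_i,\mathbf{n}_i)$ be oriented points in $\mathbb{R}^3\times\mathbb{R}^3$ with unit normals $\|\mathbf{n}_r\|=\|\mathbf{n}_i\|=1$ and $\mathbf{p}_r\neq\mathbf{p}_i$, and likewise let $\mathbf{x}_r'=(\mathbf{p}_r',\mathbf{n}_r')$, $\mathbf{x}_i'=(\mathbf{p}_i',\mathbf{n}_i')$ be oriented points with unit normals and $\mathbf{p}_r'\neq\mathbf{p}_i'$. Suppose the two pairs share the same reference point and reference normal, $\mathbf{p}_r=\mathbf{p}_r'=\mathbf{0}$ and $\mathbf{n}_r=\mathbf{n}_r'$. Then $\mathbf{f}(\mathbf{x}_r,\mathbf{x}_i)=\mathbf{f}(\mathbf{x}_r',\mathbf{x}_i')$ if and only if there exists an orthogonal matrix $\mathbf{Q}\in O(3)$ with $\mathbf{Q}\mathbf{n}_r=\mathbf{n}_r$, $\mathbf{Q}\mathbf{n}_i=\mathbf{n}_i'$ and $\mathbf{Q}\mathbf{p}_i=\mathbf{p}_i'$; that is, the point pair feature determines the oriented pair up to a rotation about, or a reflection in a plane containing, the axis spanned by the reference normal $\mathbf{n}_r$.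
   Context: For oriented points $\mathbf{x}_r=(\mathbf{p}_r,\mathbf{n}_r)$, $\mathbf{x}_i=(\mathbf{p}_i,\mathbf{n}_i)$ with $\mathbf{p}_r\ne\mathbf{p}_i$, the point pair feature is $\mathbf{f}(\mathbf{x}_r,\mathbf{x}_i)=(\angle(\mathbf{n}_r,\mathbf{d}),\angle(\mathbf{n}_i,\mathbf{d}),\angle(\mathbf{n}_r,\mathbf{n}_i),\|\mathbf{d}\|_2)\in\mathbb{R}^4$, where $\mathbf{d}=\mathbf{p}_r-\mathbf{p}_i$ and $\angle(\mathbf{u},\mathbf{v})\in[0,\pi]$ denotes the unsigned angle between nonzero vectors $\mathbf{u},\mathbf{v}$. *)

(* Defs.v *)
From mathcomp Require Import all_boot all_order all_algebra.
From mathcomp Require Import all_classical all_reals all_analysis.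
Set Implicit Arguments. Unset Strict Implicit. Unset Printing Implicit Defensive.
Import Order.TTheory GRing.Theory Num.Theory.
Local Open Scope ring_scope.

Definition dot3 {R : realType} (u v : 'cV[R]_3) : R := (u^T *m v) 0 0.
Definition norm3 {R : realType} (u : 'cV[R]_3) : R := Num.sqrt (dot3 u u).

Definition angle3 {R : realType} (u v : 'cV[R]_3) : R :=
  acos (dot3 u v / (norm3 u * norm3 v)).

Definition ppf {R : realType} (pr nr pi ni : 'cV[R]_3) : R * R * R * R :=
  let d := pr - pi in
  (angle3 nr d, angle3 ni d, angle3 nr ni, norm3 d).

Definition orthogonal3 {R : realType} (Q : 'M[R]_3) : Prop := Q^T *m Q = 1%:M.

(* Main.v *)
Require Import Defs.
From mathcomp Require Import all_boot all_order all_algebra.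
From mathcomp Require Import all_classical all_reals all_analysis.
From mathcomp Require Import ring lra.
Import Order.TTheory GRing.Theory Num.Theory.
Local Open Scope ring_scope.

Section S.
Context {R : realType}.
Implicit Types u v w : 'cV[R]_3.

Lemma dot3C u v : dot3 u v = dot3 v u.
Proof. by rewrite /dot3 -[u^T *m v]trmxK trmx_mul trmxK mxE. Qed.

Lemma dot3Dr u v w : dot3 u (v + w) = dot3 u v + dot3 u w.
Proof. by rewrite /dot3 mulmxDr mxE. Qed.

Lemma dot3Zr u v (a : R) : dot3 u (a *: v) = a * dot3 u v.
Proof. by rewrite /dot3 -scalemxAr mxE. Qed.

Lemma dot3Nr u v : dot3 u (- v) = - dot3 u v.
Proof. by rewrite -scaleN1r dot3Zr mulN1r. Qed.

Lemma dot3Br u v w : dot3 u (v - w) = dot3 u v - dot3 u w.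
Proof. by rewrite dot3Dr dot3Nr. Qed.

Lemma dot3Dl u v w : dot3 (v + w) u = dot3 v u + dot3 w u.
Proof. by rewrite !(dot3C _ u) dot3Dr. Qed.
Lemma dot3Zl u v (a : R) : dot3 (a *: v) u = a * dot3 v u.
Proof. by rewrite !(dot3C _ u) dot3Zr. Qed.
Lemma dot3Nl u v : dot3 (- v) u = - dot3 v u.
Proof. by rewrite !(dot3C _ u) dot3Nr. Qed.
Lemma dot3Bl u v w : dot3 (v - w) u = dot3 v u - dot3 w u.
Proof. by rewrite !(dot3C _ u) dot3Br. Qed.

Lemma dot3_mul (M : 'M[R]_3) u v : dot3 (M *m u) v = dot3 u (M^T *m v).
Proof. by rewrite /dot3 trmx_mul mulmxA. Qed.

Lemma dot3_orth (Q : 'M[R]_3) u v : orthogonal3 Q -> dot3 (Q *m u) (Q *m v) = dot3 u v.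
Proof. by move=> hQ; rewrite dot3_mul mulmxA hQ mul1mx. Qed.

Lemma dot3E u v : dot3 u v = \sum_i u i 0 * v i 0.
Proof. by rewrite /dot3 mxE; apply: eq_bigr => i _; rewrite mxE. Qed.

Lemma dot3_ge0 u : 0 <= dot3 u u.
Proof. by rewrite dot3E; apply: sumr_ge0 => i _; rewrite -expr2 sqr_ge0. Qed.

Lemma dot3_eq0 u : dot3 u u = 0 -> u = 0.
Proof.
rewrite dot3E => /psumr_eq0P H; apply/matrixP => i j.
rewrite (ord1 j) mxE.
have /(_ i isT)/eqP : forall k, true -> u k 0 * u k 0 = 0 by apply: H => k _; rewrite -expr2 sqr_ge0.
by rewrite mulf_eq0 orbb => /eqP.
Qed.

Lemma orth_mul (A B : 'M[R]_3) : orthogonal3 A -> orthogonal3 B -> orthogonal3 (A *m B).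
Proof.
rewrite /orthogonal3 => hA hB; rewrite trmx_mul mulmxA -(mulmxA _ _ A) hA.
by rewrite mulmx1 hB.
Qed.

Lemma orth1 : orthogonal3 (1%:M : 'M[R]_3).
Proof. by rewrite /orthogonal3 trmx1 mulmx1. Qed.

Lemma vvT_mul u w : u *m (u^T *m w) = dot3 u w *: u.
Proof. by rewrite [u^T *m w]mx11_scalar mul_mx_scalar. Qed.

Definition house u : 'M[R]_3 := 1%:M - (2 / dot3 u u) *: (u *m u^T).

Lemma house_mul u w : house u *m w = w - (2 / dot3 u u * dot3 u w) *: u.
Proof.
by rewrite /house mulmxBl mul1mx -scalemxAl -mulmxA vvT_mul scalerA.
Qed.

Lemma house_orth u : u != 0 -> orthogonal3 (house u).
Proof.
move=> u0; have uu0 : dot3 u u != 0 by apply/eqP => /dot3_eq0; apply/eqP.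
have hT : (house u)^T = house u.
  by rewrite /house linearB /= trmx1 linearZ /= trmx_mul trmxK.
rewrite /orthogonal3 hT {1}/house mulmxBl mul1mx -scalemxAl.
rewrite /house mulmxBr mulmx1 -scalemxAr mulmxA -(mulmxA u) vvT_mul.
rewrite -scalemxAl scalerA scalerBr scalerA.
set c := 2 / dot3 u u.
have -> : c * (c * dot3 u u) = c + c by rewrite /c; field.
rewrite scalerDl; set a := c *: _.
have -> : a - (a + a) = - a by rewrite opprD addrA subrr add0r.
by rewrite opprK subrK.
Qed.

Lemma refl_exists x y : dot3 x x = dot3 y y ->
  exists Q : 'M[R]_3, orthogonal3 Q /\ Q *m x = y /\
    forall z, dot3 z x = dot3 z y -> Q *m z = z.
Proof.
move=> hxy; have [->|nxy] := eqVneq x y.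
  by exists 1%:M; split; [exact: orth1|split=> [|z _]; rewrite mul1mx].
have v0 : x - y != 0 by rewrite subr_eq0.
have vv0 : dot3 (x - y) (x - y) != 0 by apply/eqP => /dot3_eq0; apply/eqP.
exists (house (x - y)); split; first exact: house_orth.
split; last first.
  move=> z hz; by rewrite house_mul (dot3C _ z) (dot3Br z) hz subrr mulr0 scale0r subr0.
rewrite house_mul.
have -> : 2 / dot3 (x - y) (x - y) * dot3 (x - y) x = 1.
  move: vv0; rewrite !dot3Bl !dot3Br hxy (dot3C y x) => vv0.
  apply: (mulIf vv0); rewrite mul1r mulrAC divfK //.
  ring.
by rewrite scale1r opprB addrC subrK.
Qed.

Lemma dot30l v : dot3 0 v = 0.
Proof. by rewrite /dot3 trmx0 mul0mx mxE. Qed.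

Lemma cs u v : dot3 u v ^+ 2 <= dot3 u u * dot3 v v.
Proof.
have [->|u0] := eqVneq u 0; first by rewrite !dot30l expr0n /= mul0r.
have uu0 : 0 < dot3 u u.
  by rewrite lt_def dot3_ge0 andbT; apply/eqP => /dot3_eq0; apply/eqP.
have := dot3_ge0 (dot3 u u *: v - dot3 u v *: u).
rewrite !dot3Bl !dot3Br !dot3Zl !dot3Zr (dot3C v u).
have -> : dot3 u u * (dot3 u u * dot3 v v) - dot3 u u * (dot3 u v * dot3 u v) -
    (dot3 u v * (dot3 u u * dot3 u v) - dot3 u v * (dot3 u v * dot3 u u)) =
    dot3 u u * (dot3 u u * dot3 v v - dot3 u v ^+ 2) by ring.
by rewrite pmulr_rge0 // subr_ge0.
Qed.

Lemma cs_norm u v : `|dot3 u v| <= norm3 u * norm3 v.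
Proof.
rewrite /norm3 -sqrtrM ?dot3_ge0 // -sqrtr_sqr ler_sqrt ?cs //.
by rewrite mulr_ge0 // dot3_ge0.
Qed.

Lemma angle_range u v : 0 < norm3 u * norm3 v ->
  dot3 u v / (norm3 u * norm3 v) \in `[-1, 1].
Proof.
move=> hp; rewrite in_itv /= -ler_norml normf_div (gtr0_norm hp).
by rewrite ler_pdivrMr // mul1r cs_norm.
Qed.

Lemma angle_inj u v u' v' : norm3 u * norm3 v = norm3 u' * norm3 v' ->
  0 < norm3 u * norm3 v -> angle3 u v = angle3 u' v' -> dot3 u v = dot3 u' v'.
Proof.
move=> hN hp /(congr1 cos); rewrite /angle3 !acosK ?angle_range -?hN //.
move/(congr1 (fun t => t * (norm3 u * norm3 v))).
by rewrite !divfK // gt_eqF.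
Qed.

Lemma norm3_sq w : norm3 w ^+ 2 = dot3 w w.
Proof. by rewrite /norm3 sqr_sqrtr // dot3_ge0. Qed.

Lemma norm3_gt0 w : w != 0 -> 0 < norm3 w.
Proof.
move=> w0; rewrite /norm3 sqrtr_gt0 lt_def dot3_ge0 andbT.
by apply/eqP => /dot3_eq0; apply/eqP.
Qed.

Lemma angleQ (Q : 'M[R]_3) u v : orthogonal3 Q -> angle3 (Q *m u) (Q *m v) = angle3 u v.
Proof. by move=> hQ; rewrite /angle3 /norm3 !dot3_orth. Qed.

Lemma normQ (Q : 'M[R]_3) u : orthogonal3 Q -> norm3 (Q *m u) = norm3 u.
Proof. by move=> hQ; rewrite /norm3 !dot3_orth. Qed.
End S.

Theorem proposition1 (R : realType) (pr nr pi ni pr' nr' pi' ni' : 'cV[R]_3) :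
  norm3 nr = 1 -> norm3 ni = 1 -> pr <> pi ->
  norm3 nr' = 1 -> norm3 ni' = 1 -> pr' <> pi' ->
  pr = 0 -> pr' = 0 -> nr = nr' ->
  (ppf pr nr pi ni = ppf pr' nr' pi' ni' <->
   exists Q : 'M[R]_3, orthogonal3 Q /\ Q *m nr = nr /\ Q *m ni = ni' /\ Q *m pi = pi').
Proof.
move=> hnr hni hp _ hni' hp' Hr Hr' Hn; subst pr pr' nr'.
split; last first.
  case=> Q [hQ [hn [hi hpi]]]; rewrite -hi -hpi /ppf !sub0r -!mulmxN.
  by rewrite -[in RHS]hn !angleQ // normQ.
rewrite /ppf => -[h1 h2 h3 h4]; rewrite !sub0r in h1 h2 h4.
have pi0 : - pi != 0 by rewrite oppr_eq0 eq_sym; apply/eqP.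
have hpp : dot3 pi pi = dot3 pi' pi'.
  by move: (norm3_sq (- pi)) (norm3_sq (- pi')); rewrite h4 !dot3Nl !dot3Nr !opprK => <- ->.
have hN : 0 < norm3 (- pi) by apply: norm3_gt0.
have e1 : dot3 nr pi = dot3 nr pi'.
  apply: oppr_inj; rewrite -!dot3Nr; apply: angle_inj h1; first by rewrite hnr h4.
  by rewrite hnr mul1r.
have e2 : dot3 ni pi = dot3 ni' pi'.
  apply: oppr_inj; rewrite -!dot3Nr; apply: angle_inj h2; first by rewrite hni hni' h4.
  by rewrite hni mul1r.
have e3 : dot3 nr ni = dot3 nr ni'.
  apply: angle_inj h3; rewrite ?hnr ?hni ?hni' ?mul1r //.
have hii : dot3 ni ni = dot3 ni' ni' by rewrite -!norm3_sq hni hni'.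
have [Q1 [hQ1 [Q1i Q1f]]] := @refl_exists _ _ _ hii.
have Q1n := Q1f _ e3.
have hpp2 : dot3 (Q1 *m pi) (Q1 *m pi) = dot3 pi' pi' by rewrite dot3_orth.
have [Q2 [hQ2 [Q2p Q2f]]] := @refl_exists _ _ _ hpp2.
exists (Q2 *m Q1); split; first exact: orth_mul.
rewrite -!mulmxA Q1n Q1i Q2p; split; last split => //.
  by apply: Q2f; rewrite -{1}Q1n dot3_orth.
by apply: Q2f; rewrite -{1}Q1i dot3_orth.
Qed.
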